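(* Let $\mathbf v_1,\mathbf v_2,\mathbf v_3,\mathbf v_4$ be decorated Lagrangians in $\mathbf R^{2n}$ such that $\mathbf v_1$ and $\mathbf v_3$ are transverse. Then $$\Lambda_{24}=\Lambda_{23}\Lambda_{13}^{-1}\Lambda_{14}+\Lambda_{21}\Lambda_{31}^{-1}\Lambda_{34}.$$
   Context: $\mathbf R^{2n}$ carries the standard symplectic form $\omega(x,y)={}^T x\begin{pmatrix}0&\mathrm{Id}\\-\mathrm{Id}&0\end{pmatrix}y$. A decorated Lagrangian is a pair $(L,\mathbf v)$ with $L$ a Lagrangian subspace ($n$-dimensional, $\omega|_L=0$) and $\mathbf v=(v_1,\dots,v_n)$ a basis of $L$, denoted by $\mathbf v$. Decorated Lagrangians are transverse if their Lagrangians intersect trivially. The symplectic $\Lambda$-length is $\Lambda_{ij}=(\omega(v_{i,k},v_{j,l}))_{k,l=1,\dots,n}$, an $n\times n$ matrix, invertible iff $\mathbf v_i,\mathbf v_j$ are transverse. *)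

(* Defs.v *)
From mathcomp Require Import all_boot all_order all_algebra.
From mathcomp Require Import reals.
Set Implicit Arguments. Unset Strict Implicit. Unset Printing Implicit Defensive.
Import Order.TTheory GRing.Theory Num.Theory.
Local Open Scope ring_scope.

Definition symp_mx (R : nzRingType) (n : nat) : 'M[R]_(n + n) :=
  block_mx 0 1%:M (- 1%:M) 0.

Definition omega (R : nzRingType) (n : nat) (x y : 'cV[R]_(n + n)) : R :=
  (x^T *m symp_mx R n *m y) 0 0.

(* A decorated Lagrangian is represented by the (2n x n) matrix V whose
   columns v_1..v_n form the basis; L is the column space of V. *)
Definition decorated_lagrangian (R : fieldType) (n : nat)
    (V : 'M[R]_(n + n, n)) : Prop :=
  \rank V = n /\ (forall k l : 'I_n, omega (col k V) (col l V) = 0).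

Definition transverse (R : fieldType) (n : nat) (V W : 'M[R]_(n + n, n)) : Prop :=
  forall x : 'cV[R]_(n + n),
    (x^T <= V^T)%MS -> (x^T <= W^T)%MS -> x = 0.

Definition Lambda (R : nzRingType) (n : nat) (V W : 'M[R]_(n + n, n)) : 'M[R]_n :=
  \matrix_(k < n, l < n) omega (col k V) (col l W).

(* Main.v *)
Require Import Defs.
From mathcomp Require Import all_boot all_order all_algebra.
From mathcomp Require Import reals.
Import Order.TTheory GRing.Theory Num.Theory.
Local Open Scope ring_scope.

Section Aux.
Variable R : fieldType.
Variable n : nat.
Local Notation J := (symp_mx R n).

Lemma LambdaE (V W : 'M[R]_(n + n, n)) : Lambda V W = V^T *m J *m W.
Proof.
apply/matrixP => k l; rewrite !mxE /omega tr_col.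
rewrite -row_mul !mxE; apply: eq_bigr => j _; rewrite !mxE.
done.
Qed.

Lemma J_unit : J \in unitmx.
Proof.
have H : J *m (- J) = 1%:M.
  rewrite mulmxN /symp_mx mulmx_block !mul0mx !mulmx0 !mul1mx ?mulmx1 ?mulNmx.
  rewrite ?addr0 ?add0r.
  by rewrite opp_block_mx !opprK oppr0 scalar_mx_block.
by case: (mulmx1_unit H).
Qed.

Lemma LamDl (V V' W : 'M[R]_(n + n, n)) : Lambda (V + V') W = Lambda V W + Lambda V' W.
Proof. by rewrite !LambdaE linearD /= !mulmxDl. Qed.
Lemma LamDr (V W W' : 'M[R]_(n + n, n)) : Lambda V (W + W') = Lambda V W + Lambda V W'.
Proof. by rewrite !LambdaE mulmxDr. Qed.
Lemma LamMl (V W : 'M[R]_(n + n, n)) C : Lambda (V *m C) W = C^T *m Lambda V W.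
Proof. by rewrite !LambdaE trmx_mul !mulmxA. Qed.
Lemma LamMr (V W : 'M[R]_(n + n, n)) C : Lambda V (W *m C) = Lambda V W *m C.
Proof. by rewrite !LambdaE !mulmxA. Qed.

End Aux.

Theorem proposition3p17 (R : realType) (n : nat)
    (V1 V2 V3 V4 : 'M[R]_(n + n, n)) :
  decorated_lagrangian V1 -> decorated_lagrangian V2 ->
  decorated_lagrangian V3 -> decorated_lagrangian V4 ->
  transverse V1 V3 ->
  Lambda V2 V4 =
    Lambda V2 V3 *m invmx (Lambda V1 V3) *m Lambda V1 V4
    + Lambda V2 V1 *m invmx (Lambda V3 V1) *m Lambda V3 V4.
Proof.
move=> [r1 l1] _ [r3 l3] _ tr.
have z1 : Lambda V1 V1 = 0 by apply/matrixP => k l; rewrite !mxE l1.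
have z3 : Lambda V3 V3 = 0 by apply/matrixP => k l; rewrite !mxE l3.
set M := row_mx V1 V3.
have capz : (V1^T :&: V3^T)%MS = 0.
  apply/row_matrixP => i; rewrite row0.
  have h1 : ((row i (V1^T :&: V3^T)%MS)^T^T <= V1^T)%MS.
    by rewrite trmxK; apply: submx_trans (row_sub i _) (capmxSl _ _).
  have h3 : ((row i (V1^T :&: V3^T)%MS)^T^T <= V3^T)%MS.
    by rewrite trmxK; apply: submx_trans (row_sub i _) (capmxSr _ _).
  by have := tr _ h1 h3 => /(congr1 trmx); rewrite trmxK trmx0.
have rk : \rank M = (n + n)%N.
  have H := mxrank_sum_cap V1^T V3^T.
  rewrite capz mxrank0 addn0 !mxrank_tr r1 r3 addsmxE in H.
  by rewrite -mxrank_tr /M tr_row_mx.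
have Mu : M \in unitmx by rewrite -row_free_unit /row_free rk.
have Nu : M^T *m symp_mx R n *m M \in unitmx.
  by rewrite !unitmx_mul unitmx_tr Mu J_unit.
have NE : M^T *m symp_mx R n *m M =
   block_mx (Lambda V1 V1) (Lambda V1 V3) (Lambda V3 V1) (Lambda V3 V3).
  by rewrite /M tr_row_mx mul_col_mx mul_col_row !LambdaE.
rewrite NE in Nu.
have := mulmxV Nu.
rewrite -[invmx _]submxK mulmx_block scalar_mx_block z1 z3 !mul0mx !add0r !addr0.
case/eq_block_mx => e1 _ _ e4.
have [u13 _] := mulmx1_unit e1.
have [u31 _] := mulmx1_unit e4.
have e4' : V4 = V1 *m usubmx (invmx M *m V4) + V3 *m dsubmx (invmx M *m V4).
  by rewrite -mul_row_col vsubmxK mulKVmx.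
have e2' : V2 = V1 *m usubmx (invmx M *m V2) + V3 *m dsubmx (invmx M *m V2).
  by rewrite -mul_row_col vsubmxK mulKVmx.
move: (usubmx _) (dsubmx _) e4' => A B ->.
move: (usubmx _) (dsubmx _) e2' => C D ->.
rewrite !(LamDl, LamDr, LamMl, LamMr) z1 z3 !(mul0mx, mulmx0, addr0, add0r).
rewrite -!mulmxA.
have k13 : invmx (Lambda V1 V3) *m (Lambda V1 V3 *m B) = B := mulKmx u13 B.
have k31 : invmx (Lambda V3 V1) *m (Lambda V3 V1 *m A) = A := mulKmx u31 A.
by rewrite k13 k31.
Qed.
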